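(* Consider the system $x(k+1)=Ax(k)+Bu(k)+w(k)$ in closed loop with the control scheme described in the context (Algorithm ATCS), suppose that $\mathbb{P}_0(x(0),\{0\})$ is feasible, and let $\gamma_z=\gamma_v=0$ (so that the cost is $J_k=N_k$), with $\lambda=1$ used in the algorithm. Then, for any disturbance realization with $w(k)\in\mathcal{W}$ for all $k$, the problems $\mathbb{P}_k(x(k),\mathcal{Z}_{f,k})$, with $\mathcal{Z}_{f,k}$ selected according to the algorithm (and with the additional constraint $N_k\le N^*_{k-1}-1$ whenever the second branch is taken), are feasible for all $k=1,2,\ldots$ reached by the algorithm, and the optimal horizon length decreases by at least $1$ at each step, i.e. $N_k^*\le N_{k-1}^*-1$.
   Context: System: $x(k+1)=Ax(k)+Bu(k)+w(k)$ with $x(k)\in\mathbb{R}^n$, $u(k)\in\mathbb{R}^m$, disturbance $w(k)\in\mathcal{W}$; state/input constraints $x(k)\in\mathcal{X}(k)$, $u(k)\in\mathcal{U}(k)$, where $\mathcal{X}(k),\mathcal{U}(k),\mathcal{W}$ are convex sets. A reference trajectory $r(k)\in\mathbb{R}^n$ is given. $K\in\mathbb{R}^{m\times n}$ is such that $A_K=A+BK$ is Schur. $\mathcal{A}\oplus\mathcal{B}=\{a+b: a\in\mathcal{A},b\in\mathcal{B}\}$, $\mathcal{A}\ominus\mathcal{B}=\{a: \{a\}\oplus\mathcal{B}\subseteq\mathcal{A}\}$. Define $\mathcal{S}(0)=\{0\}$ and $\mathcal{S}(j)=\bigoplus_{i=0}^{j-1}A_K^i\mathcal{W}$ for $j\ge1$;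 tightened sets $\mathcal{Z}_k(j)=\mathcal{X}(k+j)\ominus\mathcal{S}(j)$, $\mathcal{V}_k(j)=\mathcal{U}(k+j)\ominus K\mathcal{S}(j)$. $\|\cdot\|$ is a fixed vector norm. Problem $\mathbb{P}_k(x(k),\mathcal{Z}_f)$, for a convex set $\mathcal{Z}_f$: minimize over $N_k\in\{1,2,\ldots\}$, $v_k(0),\ldots,v_k(N_k-1)$, $z_k(0),\ldots,z_k(N_k)$ the cost $J_k=N_k+\gamma_z\sum_{j=0}^{N_k}\|z_k(j)-r(k+j)\|+\gamma_v\sum_{j=0}^{N_k-1}\|v_k(j)\|$ subject to $z_k(0)=x(k)$, $z_k(j+1)=Az_k(j)+Bv_k(j)$, $z_k(j)\in\mathcal{Z}_k(j)$ for $j=1,\ldots,N_k-1$, $v_k(j)\in\mathcal{V}_k(j)$ for $j=0,\ldots,N_k-1$, and $z_k(N_k)\in\{r(k+N_k)\}\oplus\mathcal{Z}_f$. Algorithm ATCS (parameter $\lambda$): at $k=0$ solve $\mathbb{P}_0(x(0),\{0\})$, obtaining $(J_0^*,N_0^*,v_0^*,z_0^* )$; set $\mathcal{Z}_{f,0}=\{0\}$, $\bar N=N_0^*$, apply $u(0)=v_0^*(0)$. Then, while $N^*_{k}>1$, increment $k$ and: solve $\mathbb{P}_k(x(k),\{0\})$ with optimal cost $\tilde J_k^*$ ($\tilde J_k^*=\infty$ if infeasible). If $\tilde J_k^*>J^*_{k-1}-\lambda$, set $\mathcal{Z}_{f,k}=\mathcal{Z}_{f,k-1}\oplus A_K^{N^*_{k-1}-1}\mathcal{W}$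 and solve $\mathbb{P}_k(x(k),\mathcal{Z}_{f,k})$ with the additional constraint $N_k\le N^*_{k-1}-1$, letting its solution be $(J_k^*,N_k^*,v_k^*,z_k^* )$; otherwise let $(J_k^*,N_k^*,v_k^*,z_k^* )$ be the solution of $\mathbb{P}_k(x(k),\{0\})$, set $\mathcal{Z}_{f,k}=\{0\}$ and $\bar N=N_k^*$. Apply $u(k)=v_k^*(0)$, so $x(k+1)=Ax(k)+Bu(k)+w(k)$ with $w(k)\in\mathcal{W}$ arbitrary. Upon termination, return $\bar N$. *)

(* Defs.v *)
From mathcomp Require Import all_boot all_order all_algebra.
From mathcomp Require Import all_classical all_reals.
From mathcomp Require Import ereal.
From mathcomp.real_closed Require Import complex.
Set Implicit Arguments. Unset Strict Implicit. Unset Printing Implicit Defensive.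
Import Order.TTheory GRing.Theory Num.Theory.
Local Open Scope classical_set_scope.
Local Open Scope ring_scope.

Section ATCS.
Variable R : realType.

Definition schur n (M : 'M[R]_n) : Prop :=
  forall lam : R[i],
    root (char_poly (map_mx (fun x : R => Complex x 0) M)) lam -> `|lam| < 1.

Definition convex_set_mx p q (S : set 'M[R]_(p, q)) : Prop :=
  forall x y t, S x -> S y -> 0 <= t <= 1 -> S (t *: x + (1 - t) *: y).

Definition is_vnorm p (nu : 'cV[R]_p -> R) : Prop :=
  [/\ forall x, 0 <= nu x,
      forall x, nu x = 0 -> x = 0,
      forall (a : R) x, nu (a *: x) = `|a| * nu x
    & forall x y, nu (x + y) <= nu x + nu y].

Definition msum p (S T : set 'cV[R]_p) : set 'cV[R]_p :=
  [set a + b | a in S & b in T].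
Definition pdiff p (S T : set 'cV[R]_p) : set 'cV[R]_p :=
  [set a | forall b, T b -> S (a + b)].
Definition mx_image p q (M : 'M[R]_(p, q)) (S : set 'cV[R]_q) : set 'cV[R]_p :=
  [set M *m s | s in S].

Variables (n m : nat) (A : 'M[R]_n) (B : 'M[R]_(n, m)) (K : 'M[R]_(m, n)).
Variables (X : nat -> set 'cV[R]_n) (U : nat -> set 'cV[R]_m) (W : set 'cV[R]_n).
Variable r : nat -> 'cV[R]_n.
Variables (gz gv : R) (nz : 'cV[R]_n -> R) (nv : 'cV[R]_m -> R).

Definition AK : 'M[R]_n := A + B *m K.

Fixpoint Sset (j : nat) : set 'cV[R]_n :=
  match j with
  | 0 => [set 0]
  | j'.+1 => msum (Sset j') (mx_image (AK ^+ j') W)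
  end.

Definition Zset (k j : nat) : set 'cV[R]_n := pdiff (X (k + j)) (Sset j).
Definition Vset (k j : nat) : set 'cV[R]_m := pdiff (U (k + j)) (mx_image K (Sset j)).

Definition feas (k : nat) (x : 'cV[R]_n) (Zf : set 'cV[R]_n)
  (N : nat) (v : nat -> 'cV[R]_m) (z : nat -> 'cV[R]_n) : Prop :=
  (1 <= N)%N /\
  [/\ z 0%N = x,
      forall j, (j < N)%N -> z j.+1 = A *m z j + B *m v j,
      forall j, (1 <= j)%N -> (j <= N.-1)%N -> Zset k j (z j),
      forall j, (j < N)%N -> Vset k j (v j)
    & msum [set r (k + N)%N] Zf (z N)].

Definition cost (k N : nat) (v : nat -> 'cV[R]_m) (z : nat -> 'cV[R]_n) : R :=
  N%:R + gz * (\sum_(j < N.+1) nz (z j - r (k + j)%N))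
       + gv * (\sum_(j < N) nv (v j)).

Definition optimal (k : nat)
  (F : nat -> (nat -> 'cV[R]_m) -> (nat -> 'cV[R]_n) -> Prop) N v z : Prop :=
  F N v z /\ forall N' v' z', F N' v' z' -> cost k N v z <= cost k N' v' z'.

(* optimal value (+oo if infeasible) *)
Definition optval (k : nat)
  (F : nat -> (nat -> 'cV[R]_m) -> (nat -> 'cV[R]_n) -> Prop) : \bar R :=
  ereal_inf [set e | exists N v z, F N v z /\ e = (cost k N v z)%:E].

(* One execution of Algorithm ATCS (parameter lam) up to step T, with
   states x, disturbances w, chosen optimal solutions (Ns k, vs k, zs k)
   and terminal sets Zf k. *)
Definition atcs_run (lam : R) (T : nat) (x w : nat -> 'cV[R]_n)
  (Ns : nat -> nat) (vs : nat -> nat -> 'cV[R]_m) (zs : nat -> nat -> 'cV[R]_n)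
  (Zf : nat -> set 'cV[R]_n) : Prop :=
  [/\ optimal 0 (feas 0 (x 0%N) [set 0]) (Ns 0%N) (vs 0%N) (zs 0%N),
      Zf 0%N = [set 0]
    & forall k, (1 <= k <= T)%N ->
      [/\ (1 < Ns k.-1)%N,
          W (w k.-1),
          x k = A *m x k.-1 + B *m vs k.-1 0%N + w k.-1
        & let Jprev := cost k.-1 (Ns k.-1) (vs k.-1) (zs k.-1) in
          let Jtil := optval k (feas k (x k) [set 0]) in
          ((Jprev - lam)%:E < Jtil)%E /\
            Zf k = msum (Zf k.-1) (mx_image (AK ^+ (Ns k.-1).-1) W) /\
            optimal k (fun N v z => feas k (x k) (Zf k) N v z /\ (N <= (Ns k.-1).-1)%N)
                    (Ns k) (vs k) (zs k)
          \/
          ~ ((Jprev - lam)%:E < Jtil)%E /\ Zf k = [set 0] /\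
            optimal k (feas k (x k) [set 0]) (Ns k) (vs k) (zs k)]].

End ATCS.

(* Main.v *)
Require Import Defs.
From mathcomp Require Import all_boot all_order all_algebra.
From mathcomp Require Import all_classical all_reals.
From mathcomp Require Import ereal.
From mathcomp Require Import zify.
Import Order.TTheory GRing.Theory Num.Theory.
Local Open Scope classical_set_scope.
Local Open Scope ring_scope.

Section Helpers.
Variable R : realType.
Variables (n m : nat) (A : 'M[R]_n) (B : 'M[R]_(n, m)) (K : 'M[R]_(m, n)).
Variables (X : nat -> set 'cV[R]_n) (U : nat -> set 'cV[R]_m) (W : set 'cV[R]_n).
Variable r : nat -> 'cV[R]_n.

Lemma SsetS j s w : Sset A B K W j s -> W w ->
  Sset A B K W j.+1 (s + AK A B K ^+ j *m w).
Proof. move=> Hs Hw; exists s => //; exists (AK A B K ^+ j *m w) => //; by exists w. Qed.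

Arguments SsetS {j s w}.

Lemma shift_feas k x0 Zf N v z w :
  feas A B K X U W r k x0 Zf N v z -> (1 < N)%N -> W w ->
  feas A B K X U W r k.+1 (A *m x0 + B *m v 0%N + w)
    (msum Zf (mx_image (AK A B K ^+ N.-1) W)) N.-1
    (fun j => v j.+1 + K *m (AK A B K ^+ j *m w))
    (fun j => z j.+1 + AK A B K ^+ j *m w).
Proof.
move=> [_ [z0 dyn zc vc term]] HN Hw.
split; first by case: N HN {dyn zc vc term} => [|[|N]].
split.
- by rewrite expr0 mul1mx dyn ?z0 //; apply: ltn_trans HN.
- move=> j Hj.
  rewrite dyn; last by case: N HN Hj {dyn zc vc term} => [|[|N]] //= _; rewrite ltnS.
  rewrite exprS -mulmxE -mulmxA /AK mulmxDl -mulmxA.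
  rewrite !mulmxDr !addrA; congr (_ + _); rewrite -!addrA; congr (_ + _); exact: addrC.
- move=> j Hj1 Hj b Hb.
  have Hj' : (j.+1 <= N.-1)%N by lia.
  have := zc j.+1 isT Hj' _ (SsetS Hb Hw).
  by rewrite /Zset addSnnS -addrA (addrC _ b).
- move=> j Hj _ [s Hs <-].
  have Hj' : (j.+1 < N)%N by lia.
  have := vc j.+1 Hj' (K *m (s + AK A B K ^+ j *m w)).
  rewrite addSnnS mulmxDr -addrA (addrC (K *m s)); apply.
  exists (s + AK A B K ^+ j *m w); first exact: (SsetS Hs Hw).
  by rewrite mulmxDr addrC.
- have HN1 : N.-1.+1 = N by lia.
  rewrite HN1 (_ : (k.+1 + N.-1 = k + N)%N); last by lia.
  case: term => a -> [f Hf <-].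
  exists (r (k + N)) => //; exists (f + AK A B K ^+ N.-1 *m w); last by rewrite addrA.
  by exists f => //; exists (AK A B K ^+ N.-1 *m w) => //; exists w.
Qed.
End Helpers.

Lemma cost0 (R : realType) (n m : nat) (r : nat -> 'cV[R]_n) nz (nv : 'cV[R]_m -> R) k N v z :
  cost r 0 0 nz nv k N v z = N%:R.
Proof. by rewrite /cost !mul0r !addr0. Qed.

Theorem corollary1 (R : realType) (n m : nat)
  (A : 'M[R]_n) (B : 'M[R]_(n, m)) (K : 'M[R]_(m, n))
  (X : nat -> set 'cV[R]_n) (U : nat -> set 'cV[R]_m) (W : set 'cV[R]_n)
  (r : nat -> 'cV[R]_n) (nz : 'cV[R]_n -> R) (nv : 'cV[R]_m -> R) :
  (forall k, convex_set_mx (X k)) ->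
  (forall k, convex_set_mx (U k)) ->
  convex_set_mx W ->
  schur (AK A B K) ->
  is_vnorm nz -> is_vnorm nv ->
  forall (T : nat) (x w : nat -> 'cV[R]_n) (Ns : nat -> nat)
         (vs : nat -> nat -> 'cV[R]_m) (zs : nat -> nat -> 'cV[R]_n)
         (Zf : nat -> set 'cV[R]_n),
  (* P_0(x(0), {0}) is feasible *)
  (exists N v z, feas A B K X U W r 0 (x 0%N) [set 0] N v z) ->
  (* an execution of ATCS with lambda = 1 and gamma_z = gamma_v = 0 up to step T *)
  atcs_run A B K X U W r 0 0 nz nv 1 T x w Ns vs zs Zf ->
  (* the optimal horizon decreases by at least one at each step *)
  (forall k, (1 <= k <= T)%N -> (Ns k <= (Ns k.-1).-1)%N) /\
  (* if the algorithm continues, the problem selected at step T+1 is feasible *)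
  ((1 < Ns T)%N ->
   forall wT, W wT ->
   let x' := A *m x T + B *m vs T 0%N + wT in
   let Jprev := cost r 0 0 nz nv T (Ns T) (vs T) (zs T) in
   let Jtil := optval r 0 0 nz nv T.+1 (feas A B K X U W r T.+1 x' [set 0]) in
   (((Jprev - 1)%:E < Jtil)%E ->
      exists N v z,
        feas A B K X U W r T.+1 x'
             (msum (Zf T) (mx_image (AK A B K ^+ (Ns T).-1) W)) N v z
        /\ (N <= (Ns T).-1)%N) /\
   (~ ((Jprev - 1)%:E < Jtil)%E ->
      exists N v z, feas A B K X U W r T.+1 x' [set 0] N v z)).
Proof.
move=> _ _ _ _ _ _ T x w Ns vs zs Zf _ [opt0 Zf0 run].
have feasT : forall k, (k <= T)%N -> feas A B K X U W r k (x k) (Zf k) (Ns k) (vs k) (zs k).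
  case=> [|k] Hk; first by rewrite Zf0; case: opt0.
  have Hk' : (1 <= k.+1 <= T)%N by rewrite Hk.
  case: (run _ Hk') => _ _ _ [[_ [_ [[Hf _] _]]] | [_ [-> [Hf _]]]] //.
split.
  move=> k Hk; case: (run k Hk) => H1 _ _ [[_ [_ [[_ HN] _]]] | [Hnot [_ [Hf Hmin]]]] //.
  have Hlb : ((Ns k)%:R%:E <= optval r 0 0 nz nv k (feas A B K X U W r k (x k) [set 0%R]))%E.
    apply: le_ereal_inf_tmp => e [N' [v' [z' [Hf' ->]]]].
    by rewrite lee_fin; have := Hmin _ _ _ Hf'; rewrite !cost0.
  have H : (optval r 0 0 nz nv k (feas A B K X U W r k (x k) [set 0%R]) <=
      (cost r 0 0 nz nv k.-1 (Ns k.-1) (vs k.-1) (zs k.-1) - 1)%:E)%E.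
    by rewrite leNgt; apply/negP.
  have := le_trans Hlb H; rewrite cost0 lee_fin lerBrDr natr1 ler_nat.
  lia.
move=> HNT wT HwT x' Jprev Jtil; split.
  move=> _; exists (Ns T).-1, (fun j => vs T j.+1 + K *m (AK A B K ^+ j *m wT)),
    (fun j => zs T j.+1 + AK A B K ^+ j *m wT); split => //.
  exact: shift_feas (feasT T (leqnn T)) HNT HwT.
move=> Hnot.
have H : (Jtil <= (Jprev - 1)%:E)%E by rewrite leNgt; apply/negP.
have H2 : (Jtil < Jprev%:E)%E.
  by apply: le_lt_trans H _; rewrite lte_fin ltrBlDr ltrDl ltr01.
have [y [N [v [z [Hf _]]]] _] := ereal_inf_lt H2.
by exists N, v, z.
Qed.
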